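(* Let $\mathbb{A}$ be a countably infinite homogeneous oligomorphic structure with oligomorphic approximation, and let $\mathbb{F}$ be a field of characteristic $0$. Then $\mathbb{A}$ has the finite length property over $\mathbb{F}$.
   Context: Homogeneous: every isomorphism between finite substructures extends to an automorphism. Oligomorphic: $\operatorname{Aut}(\mathbb{A})$ has finitely many orbits on each $\mathbb{A}^d$. Oligomorphic approximation: for every $d\ge1$ there is a family $\mathscr{B}$ of finite substructures of $\mathbb{A}$ such that (1) every finite substructure of $\mathbb{A}$ is a substructure of some $\mathbb{B}\in\mathscr{B}$, and (2) there is a finite bound, uniform over $\mathbb{B}\in\mathscr{B}$, on the number of $\operatorname{Aut}(\mathbb{B})$-orbits on $\mathbb{B}^d$. An orbit-finite set over $\mathbb{A}$ is obtained from some $\mathbb{A}^d$ by restricting to an $\operatorname{Aut}(\mathbb{A})$-invariant subset and quotienting by an $\operatorname{Aut}(\mathbb{A})$-invariant equivalence relation. $\operatorname{Lin}_{\mathbb{F}}X$ is the space of finite formal $\mathbb{F}$-linear combinations of elements of $X$ with the induced linear action of $\operatorname{Aut}(\mathbb{A})$; equivariant subspaces are those invariant under this action. The length of $\operatorname{Lin}_{\mathbb{F}}X$ is the supremum of $n$ such that there is a chain $V_0\subsetneq V_1\subsetneq\dots\subsetneq V_n$ of equivariant subspaces. $\mathbb{A}$ has the finite length property over $\mathbb{F}$ if $\operatorname{Lin}_{\mathbb{F}}X$ has finite length for every orbit-finite set $X$ over $\mathbb{A}$. *)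

(* Defs.v *)
From Stdlib Require List.
From mathcomp Require Import all_boot all_algebra.
Set Implicit Arguments. Unset Strict Implicit. Unset Printing Implicit Defensive.
Import GRing.Theory.
Local Open Scope ring_scope.

Record relstr := RelStr {
  carrier : Type;
  sym : Type;
  arity : sym -> nat;
  rel : forall s : sym, ('I_(arity s) -> carrier) -> Prop
}.

Section Defs.
Variable M : relstr.
Local Notation A := (carrier M).

Definition countably_infinite : Prop :=
  exists f : nat -> A, bijective f.

Definition isAut (sigma : A -> A) : Prop :=
  bijective sigma /\
  forall (s : sym M) (t : 'I_(arity s) -> A), rel t <-> rel (sigma \o t).

Definition finite_subset (B : A -> Prop) : Prop :=
  exists l : seq A, forall x, B x -> List.In x l.

Definition partial_iso (B : A -> Prop) (g : A -> A) : Prop :=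
  (forall x y, B x -> B y -> g x = g y -> x = y) /\
  forall (s : sym M) (t : 'I_(arity s) -> A),
    (forall i, B (t i)) -> (rel t <-> rel (g \o t)).

Definition homogeneous : Prop :=
  forall (B : A -> Prop) (g : A -> A),
    finite_subset B -> partial_iso B g ->
    exists sigma, isAut sigma /\ forall x, B x -> sigma x = g x.

Definition oligomorphic : Prop :=
  forall d : nat, exists reps : seq ('I_d -> A),
    forall t : 'I_d -> A, exists r, List.In r reps /\
      exists sigma, isAut sigma /\ forall i, t i = sigma (r i).

(* automorphisms of the induced substructure on B (values outside B irrelevant) *)
Definition isSubAut (B : A -> Prop) (g : A -> A) : Prop :=
  (forall x, B x -> B (g x)) /\
  (forall y, B y -> exists x, B x /\ g x = y) /\
  partial_iso B g.

Definition at_most_orbits (B : A -> Prop) (d N : nat) : Prop :=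
  exists reps : seq ('I_d -> A),
    (size reps <= N)%N /\
    (forall r, List.In r reps -> forall i, B (r i)) /\
    forall t : 'I_d -> A, (forall i, B (t i)) ->
      exists r, List.In r reps /\
        exists g, isSubAut B g /\ forall i, t i = g (r i).

Definition oligomorphic_approximation : Prop :=
  forall d : nat, (1 <= d)%N ->
    exists Bs : (A -> Prop) -> Prop,
      (forall B, Bs B -> finite_subset B) /\
      (forall C, finite_subset C -> exists B, Bs B /\ forall x, C x -> B x) /\
      exists N : nat, forall B, Bs B -> at_most_orbits B d N.

(* Data of an orbit-finite set X = S / E with S ⊆ A^d invariant and
   E an invariant equivalence relation on S. *)
Definition orbit_finite_data (d : nat) (S : ('I_d -> A) -> Prop)
    (E : ('I_d -> A) -> ('I_d -> A) -> Prop) : Prop :=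
  (forall sigma t, isAut sigma -> S t -> S (sigma \o t)) /\
  (forall t, S t -> E t t) /\
  (forall t u, E t u -> E u t) /\
  (forall t u w, E t u -> E u w -> E t w) /\
  (forall t u, E t u -> S t /\ S u) /\
  (forall sigma t u, isAut sigma -> E t u -> E (sigma \o t) (sigma \o u)).

Variable F : fieldType.

(* An element of Lin_F (S/E) is represented as the coefficient function
   t |-> coefficient of the class [t], on tuples: zero off S, constant on
   E-classes, nonzero on finitely many classes. *)
Definition inLin (d : nat) (S : ('I_d -> A) -> Prop)
    (E : ('I_d -> A) -> ('I_d -> A) -> Prop) (v : ('I_d -> A) -> F) : Prop :=
  (forall t, ~ S t -> v t = 0) /\
  (forall t u, E t u -> v t = v u) /\
  exists l : seq ('I_d -> A),
    forall t, v t <> 0 -> exists r, List.In r l /\ E r t.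

(* linear action: (sigma . v)(t) = v(sigma^-1 \o t), tau = sigma^-1 *)
Definition equivariant_subspace (d : nat) (S : ('I_d -> A) -> Prop)
    (E : ('I_d -> A) -> ('I_d -> A) -> Prop)
    (W : (('I_d -> A) -> F) -> Prop) : Prop :=
  (forall v, W v -> inLin S E v) /\
  W (fun _ => 0) /\
  (forall u v, W u -> W v -> W (fun t => u t + v t)) /\
  (forall (a : F) v, W v -> W (fun t => a * v t)) /\
  (forall sigma tau v, isAut sigma -> cancel sigma tau -> cancel tau sigma ->
     W v -> W (fun t => v (tau \o t))).

Definition equivariant_chain (d : nat) (S : ('I_d -> A) -> Prop)
    (E : ('I_d -> A) -> ('I_d -> A) -> Prop)
    (n : nat) (V : nat -> (('I_d -> A) -> F) -> Prop) : Prop :=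
  (forall i, (i <= n)%N -> equivariant_subspace S E (V i)) /\
  (forall i, (i < n)%N ->
     (forall v, V i v -> V i.+1 v) /\ ~ (forall v, V i.+1 v -> V i v)).

Definition finite_length (d : nat) (S : ('I_d -> A) -> Prop)
    (E : ('I_d -> A) -> ('I_d -> A) -> Prop) : Prop :=
  exists N : nat, forall n V, equivariant_chain S E n V -> (n <= N)%N.

Definition finite_length_property : Prop :=
  forall (d : nat) (S : ('I_d -> A) -> Prop) E, orbit_finite_data S E -> finite_length S E.

End Defs.

(* Main.v *)
Require Import Defs.
From mathcomp Require Import all_boot all_fingroup all_algebra.
From Stdlib Require Import Classical ClassicalEpsilon FunctionalExtensionality.
Set Implicit Arguments. Unset Strict Implicit. Unset Printing Implicit Defensive.
Import GRing.Theory.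
Local Open Scope ring_scope.

Lemma avg_proj (F : fieldType) (k : nat) (G : {group {perm 'I_k}}) (U : 'M[F]_k) :
  [pchar F] =i pred0 ->
  (forall p (v : 'rV_k), p \in G -> (v <= U)%MS -> (v *m perm_mx p <= U)%MS) ->
  exists P : 'M[F]_k,
    (forall v : 'rV_k, (v <= U)%MS -> v *m P = v) /\
    (forall v : 'rV_k, (v *m P <= U)%MS) /\
    (forall p, p \in G -> perm_mx p *m P = P *m perm_mx p).
Proof.
move=> ch inv.
pose P0 := proj_mx U U^C%MS.
pose T g := perm_mx g^-1 *m P0 *m perm_mx g.
have cG : (#|G|%:R : F) != 0.
  by move/pcharf0P: ch => ->; rewrite -lt0n cardG_gt0.
exists ((#|G|%:R)^-1 *: \sum_(g in G) T g); split; [|split].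
- move=> v vU; rewrite -scalemxAr mulmx_sumr.
  rewrite (eq_bigr (fun _ => v)) ?sumr_const ?scaler_nat.
    by rewrite -scaler_nat scalerA mulVf // scale1r.
  move=> g gG; have -> : v *m T g = ((v *m perm_mx g^-1) *m P0) *m perm_mx g.
    by rewrite /T !mulmxA.
  rewrite [_ *m P0]proj_mx_id ?capmx_compl //.
    by rewrite -mulmxA -perm_mxM mulVg perm_mx1 mulmx1.
  by apply: inv => //; rewrite groupV.
- move=> v; rewrite -scalemxAr scalemx_sub // mulmx_sumr summx_sub // => g gG.
  have -> : v *m T g = ((v *m perm_mx g^-1) *m P0) *m perm_mx g.
    by rewrite /T !mulmxA.
  apply: inv => //; exact: proj_mx_sub.
- move=> p pG; rewrite -scalemxAr -scalemxAl; congr (_ *: _).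
  rewrite mulmx_sumr mulmx_suml (reindex_inj (mulIg p)) /=.
  rewrite (eq_bigl (fun g => g \in G)); last by move=> g; rewrite groupMr.
  apply: eq_bigr => g gG; rewrite /T; clear T; move: P0 => X.
  rewrite invMg !mulmxA -perm_mxM mulgA mulgV mul1g -!mulmxA -perm_mxM //.
Qed.


Lemma indep_lemma (F : fieldType) (k n : nat) (U : nat -> 'M[F]_k) (Q : nat -> 'M[F]_k) (c : nat -> F) :
  (forall i, (i < n)%N -> (U i <= U i.+1)%MS /\ ~~ (U i.+1 <= U i)%MS) ->
  (forall j, (j < n)%N -> (forall v : 'rV_k, (v <= U j.+1)%MS -> v *m Q j = v) /\
                          (forall v : 'rV_k, (v *m Q j <= U j.+1)%MS)) ->
  forall m, (m <= n)%N -> \sum_(j < m) c j *: Q j = 0 -> forall j, (j < m)%N -> c j = 0.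
Proof.
move=> hch hQ.
have nest : forall i j, (i <= j)%N -> (j <= n)%N -> (U i <= U j)%MS.
  move=> i j ij jn; elim: j ij jn => [|j IH] ij jn.
    by move: ij; rewrite leqn0 => /eqP->.
  rewrite leq_eqVlt in ij; case/orP: ij => [/eqP->//|ij].
  apply: submx_trans (IH ij (ltnW jn)) _; exact: (hch j jn).1.
elim=> [|m IH] mn; first by [].
rewrite big_ord_recr /= => hs.
have cm : c m = 0.
  have [_ ] := hch m mn; case/row_subPn => i hi.
  move: hi; set w := row i (U m.+1) => hi.
  have wU : (w <= U m.+1)%MS by exact: row_sub.
  have := congr1 (mulmx w) hs; rewrite mulmx0 mulmxDr -scalemxAr ((hQ m mn).1 _ wU).
  move=> /eqP; rewrite addrC addr_eq0 => /eqP hw.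
  apply/eqP; apply/negPn/negP => cm0; move: hi; rewrite -[w](scalerK cm0) hw.
  rewrite scalemx_sub // eqmx_opp mulmx_sumr summx_sub // => j _.
  rewrite -scalemxAr scalemx_sub //.
  apply: submx_trans ((hQ j (ltn_trans (ltn_ord j) mn)).2 w) _.
  by apply: nest => //; exact: ltnW.
move: hs; rewrite cm scale0r addr0 => hs j; rewrite ltnS leq_eqVlt => /orP[/eqP->//|jm].
exact: IH (ltnW mn) hs j jm.
Qed.

Lemma core_bound (F : fieldType) (k n N : nat) (G : {group {perm 'I_k}})
    (U : nat -> 'M[F]_k) (phi : 'M[F]_k -> 'rV[F]_N) :
  [pchar F] =i pred0 ->
  (forall (c : 'I_n -> F) (Q : 'I_n -> 'M[F]_k),
      phi (\sum_(j < n) c j *: Q j) = \sum_(j < n) c j *: phi (Q j)) ->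
  (forall i p (v : 'rV_k), (i <= n)%N -> p \in G -> (v <= U i)%MS -> (v *m perm_mx p <= U i)%MS) ->
  (forall i, (i < n)%N -> (U i <= U i.+1)%MS /\ ~~ (U i.+1 <= U i)%MS) ->
  (forall M, (forall p, p \in G -> perm_mx p *m M = M *m perm_mx p) -> phi M = 0 -> M = 0) ->
  (n <= N)%N.
Proof.
move=> ch phiL inv hch hinj.
have hP : forall j : nat, exists P : 'M[F]_k, (j < n)%N ->
    (forall v : 'rV_k, (v <= U j.+1)%MS -> v *m P = v) /\
    (forall v : 'rV_k, (v *m P <= U j.+1)%MS) /\
    (forall p, p \in G -> perm_mx p *m P = P *m perm_mx p).
  move=> j; case: (ltnP j n) => jn; last by exists 0.
  have [P HP] := avg_proj ch (fun p v => inv j.+1 p v jn).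
  by exists P.
pose Ps j := proj1_sig (constructive_indefinite_description _ (hP j)).
have HPs j : (j < n)%N -> _ := proj2_sig (constructive_indefinite_description _ (hP j)).
pose X := \matrix_(j < n) phi (Ps j).
have : row_free X.
  rewrite -kermx_eq0; apply/rowV0P => v /sub_kermxP vX.
  have Z0 : \sum_(j < n) v 0 j *: Ps j = 0.
    apply: hinj.
      move=> p pG; rewrite mulmx_sumr mulmx_suml; apply: eq_bigr => j _.
      by rewrite -scalemxAl -scalemxAr ((HPs j (ltn_ord j)).2.2 p pG).
    rewrite phiL; transitivity (v *m X) => //; rewrite mulmx_sum_row; apply: eq_bigr => j _; by rewrite rowK.
  pose c j := if @insub nat (fun x => (x < n)%N) 'I_n j is Some o then v 0 o else 0.
  have cE (o : 'I_n) : c o = v 0 o by rewrite /c valK.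
  have := @indep_lemma F k n U Ps c hch
    (fun j jn => let: conj a (conj b _) := HPs j jn in conj a b) n (leqnn n).
  move=> H; apply/rowP => j; rewrite mxE -cE H //.
  rewrite -[RHS]Z0; apply: eq_bigr => o _; by rewrite cE.
by move/eqP => <-; apply: rank_leq_col.
Qed.
Lemma exists_mx_of (F : fieldType) k (P : 'rV[F]_k -> Prop) :
  P 0 -> (forall u v, P u -> P v -> P (u + v)) -> (forall a u, P u -> P (a *: u)) ->
  exists U : 'M[F]_k, forall v, P v <-> (v <= U)%MS.
Proof.
move=> P0 PD PZ.
suff: forall s (U : 'M[F]_k), (k - \rank U <= s)%N -> (forall w : 'rV_k, (w <= U)%MS -> P w) ->
  exists U : 'M[F]_k, forall v, P v <-> (v <= U)%MS.
  move=> /(_ k 0); apply; first exact: leq_subr.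
  by move=> w; rewrite submx0 => /eqP ->.
elim=> [|s IH] U hs hU.
  exists U => v; split => [Pv|]; last exact: hU; apply/negPn/negP => nv.
  have : (U < U + v)%MS by rewrite ltmxE addsmxSl /=; apply: contra nv; apply: submx_trans; exact: addsmxSr.
  rewrite ltmxErank addsmxSl /= => hr.
  have := rank_leq_col (U + v)%MS; move: hs; rewrite leqn0 subn_eq0 => h1 h2.
  by have := leq_trans hr (leq_trans h2 h1); rewrite ltnn.
case: (classic (exists v, P v /\ ~ (v <= U)%MS)) => [[v [Pv nv]]|].
  apply: (IH (U + v)%MS).
    have : (U < U + v)%MS.
      by rewrite ltmxE addsmxSl /=; apply/negP => h; apply: nv; apply: submx_trans h; exact: addsmxSr.
    rewrite ltmxErank addsmxSl /= => hr.
    have := rank_leq_col (U + v)%MS => h2.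
    move: hs; rewrite leq_subLR => h1; rewrite leq_subLR.
    by apply: (leq_trans h1); rewrite addnS -addSn leq_add2r.
  move=> w /sub_addsmxP [[a b] /= ->]; apply: PD; first by apply: hU; exact: submxMl.
  have : (b *m v <= v)%MS by exact: submxMl.
  by case/sub_rVP => c ->; apply: PZ.
move=> nex; exists U => v; split => [Pv|]; last exact: hU.
by apply: NNPP => nv; apply: nex; exists v.
Qed.

Lemma In_mem (T : eqType) (x : T) s : x \in s -> List.In x s.
Proof. elim: s => //= y s IH; rewrite inE => /orP[/eqP->|/IH]; auto. Qed.

Lemma In_nth (T : Type) (x0 x : T) (s : seq T) :
  List.In x s -> exists i, (i < size s)%N /\ nth x0 s i = x.
Proof.
elim: s => //= y s IH [->|/IH [i [hi hn]]]; first by exists 0%N.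
by exists i.+1.
Qed.

Lemma gather (X : Type) (Q : nat -> seq X -> Prop) n :
  (forall i, (i < n)%N -> exists l, Q i l) ->
  exists L : seq X, forall i, (i < n)%N -> exists l, Q i l /\ forall x, List.In x l -> List.In x L.
Proof.
elim: n => [|n IH] H; first by exists [::].
have [L HL] := IH (fun i hi => H i (ltnW hi)).
have [l Hl] := H n (ltnSn n).
exists (l ++ L) => i; rewrite ltnS leq_eqVlt => /orP[/eqP->|hi].
  by exists l; split => // x hx; apply: List.in_or_app; left.
have [l' [Hl' hs]] := HL i hi; exists l'; split => // x /hs hx.
by apply: List.in_or_app; right.
Qed.

Lemma subaut_id (M : relstr) (B : carrier M -> Prop) : isSubAut B id.
Proof.
split => //; split; first by move=> y By; exists y.
by split => // s t _.
Qed.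

Lemma subaut_comp (M : relstr) (B : carrier M -> Prop) g1 g2 :
  isSubAut B g1 -> isSubAut B g2 -> isSubAut B (g1 \o g2).
Proof.
move=> [m1 [s1 [i1 r1]]] [m2 [s2 [i2 r2]]]; split; first by move=> x /m2 /m1.
split.
  move=> y /s1 [x1 [B1 e1]]; have [x2 [B2 e2]] := s2 _ B1.
  by exists x2; split => //=; rewrite e2.
split.
  by move=> x y Bx By /= /i1 h; apply: i2 => //; apply: h; apply: m2.
move=> s t Bt; rewrite (r2 s t Bt); apply: (r1 s (g2 \o t)) => i; exact: m2.
Qed.
Definition pb (P : Prop) : bool := if excluded_middle_informative P then true else false.
Lemma pbP (P : Prop) : reflect P (pb P).
Proof. by rewrite /pb; case: excluded_middle_informative => h; constructor. Qed.

Lemma mem_map_filter (A : Type) (code : A -> nat) (P : pred A) (s : seq A) c :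
  c \in [seq code x | x <- s & P x] <-> exists x, List.In x s /\ P x /\ c = code x.
Proof.
elim: s => [|y s IH] /=; first by split => // [[x []]].
case Py: (P y) => /=; rewrite ?inE.
  split.
    case/orP => [/eqP->|/IH [x [h1 h2]]]; first by exists y; split; [left|split].
    by exists x; split => //; right.
  move=> [x [[<-|hx] [px hc]]]; first by rewrite hc eqxx.
  by apply/orP; right; apply/IH; exists x.
split; first by move/IH => [x [h1 h2]]; exists x; split => //; right.
move=> [x [[<-|hx] [px hc]]]; first by rewrite Py in px.
by apply/IH; exists x.
Qed.

Lemma enum_subset (A : Type) (f0 : nat -> A) (code : A -> nat) (B : A -> Prop) :
  cancel f0 code -> cancel code f0 -> (exists l : seq A, forall x, B x -> List.In x l) ->
  exists cs : seq nat,
    (forall j, (j < size cs)%N -> B (f0 (nth 0%N cs j))) /\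
    (forall x, B x -> exists j, (j < size cs)%N /\ f0 (nth 0%N cs j) = x) /\
    (forall j1 j2, (j1 < size cs)%N -> (j2 < size cs)%N ->
        f0 (nth 0%N cs j1) = f0 (nth 0%N cs j2) -> j1 = j2).
Proof.
move=> f0K codeK [l0 hl0].
pose cs := undup [seq code x | x <- l0 & pb (B x)].
have memcs c : c \in cs -> B (f0 c).
  by rewrite mem_undup => /mem_map_filter [x [_ [/pbP Bx ->]]]; rewrite codeK.
exists cs; split; [|split].
- by move=> j hj; apply: memcs; apply: mem_nth.
- move=> x Bx.
  have hx : code x \in cs.
    rewrite mem_undup; apply/mem_map_filter; exists x; split; first exact: hl0.
    by split => //; apply/pbP.
  by exists (index (code x) cs); rewrite index_mem hx nth_index // codeK.
- move=> j1 j2 h1 h2 e.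
  have e' : nth 0%N cs j1 = nth 0%N cs j2 by rewrite -[LHS]f0K e f0K.
  by apply/eqP; rewrite -(nth_uniq 0%N h1 h2 (undup_uniq _)) e'.
Qed.

Lemma tuple_index (A : Type) (f0 : nat -> A) (code : A -> nat) (B : A -> Prop) (d : nat) :
  cancel f0 code -> cancel code f0 -> (exists l : seq A, forall x, B x -> List.In x l) ->
  exists (k : nat) (tup : 'I_k -> 'I_d -> A),
    (forall j i, B (tup j i)) /\
    (forall j1 j2, tup j1 =1 tup j2 -> j1 = j2) /\
    (forall t : 'I_d -> A, (forall i, B (t i)) -> exists j, tup j =1 t).
Proof.
move=> f0K codeK hfin.
have [cs [h1 [h2 h3]]] := enum_subset f0K codeK hfin.
pose m := size cs.
pose I := {ffun 'I_d -> 'I_m}.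
exists #|I|, (fun j i => f0 (nth 0%N cs (@enum_val I predT j i))); split; [|split].
- by move=> j i; apply: h1.
- move=> j1 j2 e; apply: enum_val_inj; apply/ffunP => i; apply: val_inj.
  by apply: h3; [exact: ltn_ord | exact: ltn_ord | exact: (e i)].
- move=> t Bt.
  have : forall i, exists o : 'I_m, f0 (nth 0%N cs o) = t i.
    by move=> i; have [j [hj e]] := h2 _ (Bt i); exists (Ordinal hj).
  case/fin_all_exists => g hg.
  by exists (enum_rank [ffun i => g i]) => i /=; rewrite enum_rankK ffunE hg.
Qed.

Lemma perm_of_subaut (M : relstr) (B : carrier M -> Prop) d k (tup : 'I_k -> 'I_d -> carrier M) :
  (forall j i, B (tup j i)) ->
  (forall j1 j2, tup j1 =1 tup j2 -> j1 = j2) ->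
  (forall t : 'I_d -> carrier M, (forall i, B (t i)) -> exists j, tup j =1 t) ->
  forall g0, isSubAut B g0 -> exists p : {perm 'I_k}, forall j, tup (p j) =1 g0 \o tup j.
Proof.
move=> tB tinj tsurj g0 [gm [gs [ginj _]]].
have : forall j, exists j', tup j' =1 g0 \o tup j.
  by move=> j; apply: tsurj => i /=; apply: gm.
case/fin_all_exists => h hh.
have hinj : injective h.
  move=> j1 j2 e; apply: tinj => i; apply: ginj => //.
  by have := hh j1 i; have := hh j2 i; rewrite e /= => <- <-.
by exists (perm hinj) => j i; rewrite permE hh.
Qed.

Lemma nth_In' (T : Type) (x0 : T) (s : seq T) r : (r < size s)%N -> List.In (nth x0 s r) s.
Proof. elim: s r => //= y s IH [|r] /= h; [by left | right; exact: IH]. Qed.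

Theorem mainTheorem3 (M : relstr) (F : fieldType) :
  countably_infinite M -> homogeneous M -> oligomorphic M ->
  oligomorphic_approximation M -> [pchar F]%R =i pred0 ->
  finite_length_property M F.
Proof.
move=> [f0 [code f0K codeK]] hom _ approx ch d S E hSE.
have [Bs [hfin [hcov [N hN]]]] := approx (d + d).+1 isT.
exists N => n V [hsub hchain].
have hw : forall i, (i < n)%N -> exists l : seq ('I_d -> carrier M),
   exists w, V i.+1 w /\ ~ V i w /\ forall t, w t <> 0 -> exists r, List.In r l /\ E r t.
  move=> i hi; have [_ hn] := hchain i hi.
  have [w hw] := not_all_ex_not _ _ hn.
  have [h1 h2] := imply_to_and _ _ hw.
  have [_ [_ [l hl]]] := (hsub i.+1 hi).1 w h1.
  by exists l, w.
have [L HL] := gather hw.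
pose x0 := f0 0%N.
pose C x := x = x0 \/ exists r, List.In r L /\ exists j, x = r j.
have Cfin : @finite_subset M C.
  exists (x0 :: List.flat_map (fun r => List.map r (enum 'I_d)) L).
  move=> x [->|[r [hr [j ->]]]]; first by left.
  right; apply List.in_flat_map; exists r; split => //; apply List.in_map; apply In_mem; by rewrite mem_enum.
have [B [BsB CB]] := hcov C Cfin.
have [reps [hsz [hrepsB hreps]]] := hN B BsB.
have [k [tup [tB [tinj tsurj]]]] := tuple_index d f0K codeK (hfin B BsB).
pose vec (v : ('I_d -> carrier M) -> F) : 'rV[F]_k := \row_j v (tup j).
pose Bsupp (v : ('I_d -> carrier M) -> F) := forall t, v t <> 0 -> exists r, (forall j, B (r j)) /\ E r t.
pose Pi i (w : 'rV[F]_k) := exists v, V i v /\ Bsupp v /\ w = vec v.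
have hU : forall i, exists U : 'M[F]_k, (i <= n)%N -> forall w, Pi i w <-> (w <= U)%MS.
  move=> i; case: (leqP i n) => hi; last by exists 0.
  have [eqs [z [hadd [hsc hact]]]] := hsub i hi.
  suff [U hU]: exists U : 'M[F]_k, forall w, Pi i w <-> (w <= U)%MS by exists U.
  apply: exists_mx_of.
  - exists (fun _ => 0); split => //; split => //; by apply/rowP => j; rewrite !mxE.
  - move=> _ _ [v1 [h1 [s1 ->]]] [v2 [h2 [s2 ->]]]; exists (fun t => v1 t + v2 t).
    split; first exact: hadd.
    split; last by apply/rowP => j; rewrite !mxE.
    move=> t h; case: (eqVneq (v1 t) 0) => [e1|n1]; last by apply: s1; apply/eqP.
    by apply: s2; move: h; rewrite e1 add0r.
  - move=> a _ [v [h1 [s1 ->]]]; exists (fun t => a * v t).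
    split; first exact: hsc.
    split; last by apply/rowP => j; rewrite !mxE.
    by move=> t h; apply: s1 => e; apply: h; rewrite e mulr0.
pose U i := proj1_sig (constructive_indefinite_description _ (hU i)).
have HU i : (i <= n)%N -> forall w, Pi i w <-> (w <= U i)%MS :=
  proj2_sig (constructive_indefinite_description _ (hU i)).
pose Gs := [set p : {perm 'I_k} | pb (exists g0, isSubAut B g0 /\ forall j, tup (p j) =1 g0 \o tup j)].
have gsG : group_set Gs.
  apply/group_setP; split.
    rewrite inE; apply/pbP; exists id; split; first exact: subaut_id.
    by move=> j i; rewrite perm1.
  move=> p q; rewrite !inE => /pbP [g1 [s1 e1]] /pbP [g2 [s2 e2]]; apply/pbP.
  exists (g2 \o g1); split; first exact: subaut_comp.
  by move=> j i; rewrite permM /= e2 /= e1.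
pose G := Group gsG.
pose rho0 : 'I_(d + d).+1 -> carrier M := fun _ => x0.
have hab : forall r : 'I_N, exists o : option ('I_k * 'I_k), (r < size reps)%N ->
   exists a b, o = Some (a, b) /\ (forall i : 'I_d, tup a i = nth rho0 reps r (inord i)) /\
                                  (forall i : 'I_d, tup b i = nth rho0 reps r (inord (d + i))).
  move=> r; case: (ltnP r (size reps)) => hr; last by exists None.
  have hB := hrepsB _ (nth_In' rho0 hr).
  have [a ha] := tsurj (fun i : 'I_d => nth rho0 reps r (inord i)) (fun i => hB _).
  have [b hb] := tsurj (fun i : 'I_d => nth rho0 reps r (inord (d + i))) (fun i => hB _).
  by exists (Some (a, b)) => _; exists a, b.
case/fin_all_exists: hab => ab hab.
pose phi (Mx : 'M[F]_k) : 'rV[F]_N := \row_r (if ab r is Some (a, b) then Mx a b else 0).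
have hinv := hSE.2.2.2.2.2.
apply: (@core_bound F k n N G U phi ch).
- move=> c Q; apply/rowP => r; rewrite mxE summxE.
  rewrite (eq_bigr (fun j => c j * (phi (Q j)) 0 r)); last by move=> j _; rewrite mxE.
  rewrite /phi; under eq_bigr => j _ do rewrite mxE.
  case: (ab r) => [[a b]|]; last by rewrite big1 // => j _; rewrite mulr0.
  by rewrite summxE; apply: eq_bigr => j _; rewrite mxE.
- move=> i p v hi; rewrite inE => /pbP [g0 [sg eg]] /(HU i hi) [w [Vw [Sw ->]]].
  apply/(HU i hi).
  have [sig [asig seq]] := hom B g0 (hfin B BsB) sg.2.2.
  have [tau sK tK] := asig.1.
  exists (fun t => w (tau \o t)); split; first exact: (hsub i hi).2.2.2.2 sig tau w asig sK tK Vw.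
  split.
    move=> t h; have [r [rB Er]] := Sw _ h.
    exists (sig \o r); split; first by move=> j /=; rewrite seq //; exact: sg.1 _ (rB j).
    have := hinv sig _ _ asig Er.
    have -> : sig \o (tau \o t) = t by apply: functional_extensionality => x /=; rewrite tK.
    by [].
  apply/rowP => j; rewrite -[p]invgK -col_permE !mxE.
  congr w; apply: functional_extensionality => x /=.
  have := eg (p^-1 j)%g x; rewrite permKV /= -seq ?tB // => ->.
  by rewrite sK.
- move=> i hi; have hi' := ltnW hi; split.
    apply/rV_subP => v /(HU i hi') [w [Vw [Sw ->]]]; apply/(HU i.+1 hi).
    by exists w; split => //; exact: (hchain i hi).1.
  apply/negP => sub.
  have [l [[w [V1w [nVw hl]]] hlL]] := HL i hi.
  have Sw : Bsupp w.
    move=> t /hl [r [rl Er]]; exists r; split => // j; apply: CB; right.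
    by exists r; split; [exact: hlL | exists j].
  have : (vec w <= U i)%MS by apply: submx_trans sub; apply/(HU i.+1 hi); exists w.
  move/(HU i hi') => [v [Vv [Sv ev]]]; apply: nVw.
  have cw := ((hsub i.+1 hi).1 w V1w).2.1.
  have cv := ((hsub i hi').1 v Vv).2.1.
  have agree : forall r, (forall j, B (r j)) -> w r = v r.
    move=> r rB; have [j hj] := tsurj r rB.
    have -> : r = tup j by apply: functional_extensionality => x; rewrite hj.
    by have := congr1 (fun X : 'rV[F]_k => X 0 j) ev; rewrite /= !mxE.
  have -> : w = v; last by [].
  apply: functional_extensionality => t.
  case: (eqVneq (w t) 0) => [w0|wn].
    case: (eqVneq (v t) 0) => [v0|/eqP vn]; first by rewrite w0 v0.
    have [r [rB Er]] := Sv t vn.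
    by rewrite -(cw _ _ Er) -(cv _ _ Er) agree.
  move/eqP: wn => wn; have [r [rB Er]] := Sw t wn.
  by rewrite -(cw _ _ Er) -(cv _ _ Er) agree.
- move=> Mx heq hphi; apply/matrixP => j1 j2; rewrite [RHS]mxE.
  pose t : 'I_(d + d).+1 -> carrier M := fun x =>
    if @insub nat (fun y => (y < d)%N) 'I_d x is Some i then tup j1 i
    else if @insub nat (fun y => (y < d)%N) 'I_d (x - d)%N is Some i then tup j2 i else x0.
  have tBB : forall x, B (t x).
    move=> x; rewrite /t; case: insub => [i|]; first exact: tB.
    case: insub => [i|]; first exact: tB.
    by apply: CB; left.
  have [rho [hrho [g0 [sg eg]]]] := hreps t tBB.
  have [r [hr er]] := In_nth rho0 hrho.
  have hrN : (r < N)%N := leq_trans hr hsz.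
  have [a [b [hab1 [ha hb]]]] := hab (Ordinal hrN) hr.
  have [p hp] := perm_of_subaut tB tinj tsurj sg.
  have pG : p \in G by rewrite inE; apply/pbP; exists g0.
  have Dd : forall i : 'I_d, (i < (d + d).+1)%N.
    by move=> i; rewrite ltnS (leq_trans (ltnW (ltn_ord i))) // leq_addr.
  have Dd2 : forall i : 'I_d, (d + i < (d + d).+1)%N.
    by move=> i; rewrite ltnS leq_add2l ltnW.
  have pa : p a = j1.
    apply: tinj => i; rewrite (hp a i) /= ha /= er -eg /t inordK ?Dd //.
    by rewrite valK.
  have pb' : p b = j2.
    apply: tinj => i; rewrite (hp b i) /= hb /= er -eg /t inordK ?Dd2 //.
    rewrite insubF; last by rewrite ltnNge leq_addr.
    by rewrite addKn valK.
  have := congr1 (fun X : 'M[F]_k => X a (p b)) (heq p pG).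
  rewrite -row_permE -[p in perm_mx p]invgK -col_permE !mxE permK pa pb' => ->.
  by have := congr1 (fun X : 'rV[F]_N => X 0 (Ordinal hrN)) hphi; rewrite !mxE /= hab1.
Qed.
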